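(* Let $(G,c)$ be a $k$-terminal network with terminal set $Q$ such that for every $S\subset Q$ with $S\neq\emptyset,Q$ the minimum-cost $S$-separating cut of $(G,c)$ is unique. Let $A_{G,c}$ be its cutset-edge incidence matrix. Then there exists an edge-cost function $\hat c:E(G)\to\mathbb{R}^+$ such that every mimicking network $(G',c')$ of $(G,\hat c)$ satisfies $|E(G')|\ge \mathrm{rank}(A_{G,c})$.
   Context: A $k$-terminal network $(G,c)$ is an undirected graph with edge costs $c:E(G)\to\mathbb{R}^+$ and terminal set $Q\subseteq V(G)$, $|Q|=k$. For $S\subset Q$, $\bar S=Q\setminus S$; a cut $(W,V(G)\setminus W)$ is $S$-separating if $W\cap Q\in\{S,\bar S\}$; its cutset is the set of edges with exactly one endpoint in $W$ and its cost is the total cost of the cutset. The minimum $S$-separating cut is unique if every other $S$-separating cut has strictly larger cost. $\mathrm{mincut}_{G,c}(S,\bar S)$ is the minimum cost of an $S$-separating cut. Cutset-edge incidence matrix: fix an enumeration $S_1,\dots,S_m$, $m=2^{k-1}-1$, of representatives of the distinct nontrivial bipartitions $Q=S_i\cup\bar S_i$, and for each $i$ fix a minimum-cost $S_i$-separating cut (ties broken arbitrarily); $A_{G,c}\in\{0,1\}^{m\times E(G)}$ has $(A_{G,c})_{i,e}=1$ iff $e$ is in the cutset of that cut. A mimicking network of $(G,\hat c)$ is a $k$-terminal network $(G',c')$ with the same terminal set $Q$ and $\mathrm{mincut}_{G',c'}(S,\bar S)=\mathrm{mincut}_{G,\hat c}(S,\bar S)$ for all $S\subset Q$, $S\neq\emptyset,Q$.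 *)

(* Defs.v *)
From HB Require Import structures.
From mathcomp Require Import all_boot all_order all_algebra.
Set Implicit Arguments. Unset Strict Implicit. Unset Printing Implicit Defensive.
Import Order.TTheory GRing.Theory Num.Theory.
Local Open Scope ring_scope.

(* A k-terminal network: vertex type V : finType, n edges indexed by 'I_n,
   with endpoints [ends e], terminals given by an injective map q : T -> V
   from a terminal index type T with #|T| = k (so Q = q @: T). *)

Definition simple_graph (V : finType) (n : nat) (ends : 'I_n -> V * V) : Prop :=
  (forall e, (ends e).1 != (ends e).2) /\
  (forall e f, ends e = ends f \/ ends e = ((ends f).2, (ends f).1) -> e = f).

Definition pos_costs (R : realFieldType) (n : nat) (c : 'I_n -> R) : Prop :=
  forall e, 0 < c e.

Definition in_cutset (V : finType) (n : nat) (ends : 'I_n -> V * V)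
  (W : {set V}) (e : 'I_n) : bool :=
  ((ends e).1 \in W) != ((ends e).2 \in W).

Definition cut_cost (R : realFieldType) (V : finType) (n : nat)
  (ends : 'I_n -> V * V) (c : 'I_n -> R) (W : {set V}) : R :=
  \sum_(e < n | in_cutset ends W e) c e.

Definition nontriv (T : finType) (S : {set T}) : bool :=
  (S != set0) && (S != setT).

Definition separating (T V : finType) (q : T -> V) (S : {set T}) (W : {set V})
  : bool :=
  ([set t | q t \in W] == S) || ([set t | q t \in W] == ~: S).

(* mincut_{G,c}(S, Q\S): minimum cost of an S-separating cut
   (q @: S is always S-separating when q is injective) *)
Definition mincut (R : realFieldType) (T V : finType) (q : T -> V) (n : nat)
  (ends : 'I_n -> V * V) (c : 'I_n -> R) (S : {set T}) : R :=
  \big[Num.min/cut_cost ends c (q @: S)]_(W : {set V} | separating q S W)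
     cut_cost ends c W.

Definition unique_mincut (R : realFieldType) (T V : finType) (q : T -> V)
  (n : nat) (ends : 'I_n -> V * V) (c : 'I_n -> R) (S : {set T}) : Prop :=
  exists W0 : {set V}, separating q S W0 /\
    forall W : {set V}, separating q S W -> W != W0 -> W != ~: W0 ->
      cut_cost ends c W0 < cut_cost ends c W.

(* rep enumerates representatives of the distinct nontrivial bipartitions
   {S, Q\S} of Q, each exactly once *)
Definition bipartition_enum (T : finType) (m : nat) (rep : 'I_m -> {set T})
  : Prop :=
  (forall i, nontriv (rep i)) /\
  (forall S : {set T}, nontriv S ->
     (exists i, rep i = S \/ rep i = ~: S) /\
     (forall i j, (rep i = S \/ rep i = ~: S) -> (rep j = S \/ rep j = ~: S) ->
        i = j)).

Definition mincut_selection (R : realFieldType) (T V : finType) (q : T -> V)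
  (n : nat) (ends : 'I_n -> V * V) (c : 'I_n -> R) (m : nat)
  (rep : 'I_m -> {set T}) (sel : 'I_m -> {set V}) : Prop :=
  forall i, separating q (rep i) (sel i) /\
            cut_cost ends c (sel i) = mincut q ends c (rep i).

Definition cutset_matrix (R : realFieldType) (V : finType) (n : nat)
  (ends : 'I_n -> V * V) (m : nat) (sel : 'I_m -> {set V}) : 'M[R]_(m, n) :=
  \matrix_(i < m, e < n) (in_cutset ends (sel i) e)%:R.

Definition mimicking (R : realFieldType) (T V V' : finType)
  (q : T -> V) (n : nat) (ends : 'I_n -> V * V) (c : 'I_n -> R)
  (q' : T -> V') (n' : nat) (ends' : 'I_n' -> V' * V') (c' : 'I_n' -> R)
  : Prop :=
  forall S : {set T}, nontriv S -> mincut q' ends' c' S = mincut q ends c S.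

(* Main.v *)
Require Import Defs.
From HB Require Import structures.
From mathcomp Require Import all_boot all_order all_algebra.
Set Implicit Arguments. Unset Strict Implicit. Unset Printing Implicit Defensive.
Import Order.TTheory GRing.Theory Num.Theory.
Local Open Scope ring_scope.


Section Cone.
Variables (R : realFieldType) (n : nat) (I : finType) (Pl : pred I)
  (L : I -> 'rV[R]_n -> R).
Hypothesis Llin : forall l a x y, L l (a *: x + y) = a * L l x + L l y.

Definition Cn (x : 'rV[R]_n) := [forall l, Pl l ==> (0 < L l x)].

Lemma Cn_cone a x y : 0 <= a -> Cn x -> Cn y -> Cn (x + a *: y).
Proof.
move=> a0 /forallP Hx /forallP Hy; apply/forallP => l; apply/implyP => Pll.
rewrite addrC Llin.
have := implyP (Hx l) Pll; have := implyP (Hy l) Pll => hy hx.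
exact: ltr_wpDl (mulr_ge0 a0 (ltW hy)) hx.
Qed.

Lemma Cn_open x z : Cn x -> exists mu, 0 <= mu /\ Cn (mu *: x + z).
Proof.
move=> /forallP Hx.
have Hx' l : Pl l -> 0 < L l x by move=> Pll; exact: (implyP (Hx l) Pll).
set mu := \sum_(l | Pl l) `|L l z| / L l x + 1.
have mu_ge l : Pl l -> `|L l z| / L l x + 1 <= mu.
  move=> Pll; rewrite /mu (bigD1 l) //= lerD2r lerDl sumr_ge0 // => l' /andP[Pl' _].
  by rewrite divr_ge0 // ltW // Hx'.
have mu0 : 0 <= mu.
  by rewrite /mu addr_ge0 // sumr_ge0 // => l' Pl'; rewrite divr_ge0 // ltW // Hx'.
exists mu; split => //; apply/forallP => l; apply/implyP => Pll.
rewrite Llin.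
have hx := Hx' l Pll.
have h1 : (`|L l z| / L l x + 1) * L l x <= mu * L l x by rewrite ler_pM2r // mu_ge.
have h2 : (`|L l z| / L l x + 1) * L l x = `|L l z| + L l x.
  by rewrite mulrDl mul1r divfK // gt_eqF.
have h3 : 0 <= `|L l z| + L l z.
  by rewrite -lerBlDr sub0r -normrN ler_norm.
have : 0 < mu * L l x + L l z.
  apply: (lt_le_trans _ (lerD h1 (lexx (L l z)))); rewrite h2.
  by rewrite -addrA [L l x + _]addrC addrA ltr_wpDl.
by [].
Qed.
End Cone.
Section Avoid.
Variables (R : realFieldType) (n : nat) (C : pred 'rV[R]_n).
Hypothesis HC : forall a x y, 0 <= a -> C x -> C y -> C (x + a *: y).
Variable P : nat -> pred 'rV[R]_n.
Hypothesis Plin : forall j a x y, P j x -> P j y -> P j (a *: x + y).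
Hypothesis Pprop : forall j, exists y, C y && ~~ P j y.
Variable x0 : 'rV[R]_n.
Hypothesis Cx0 : C x0.

Lemma P0 j x : P j x -> P j 0.
Proof. by move=> Px; have := Plin (-1) Px Px; rewrite scaleN1r addNr. Qed.

Lemma PZ j a x : P j x -> P j (a *: x).
Proof. by move=> Px; have := Plin a Px (P0 Px); rewrite addr0. Qed.

Lemma PD j x y : P j x -> P j y -> P j (x + y).
Proof. by move=> Px Py; have := Plin 1 Px Py; rewrite scale1r. Qed.

Lemma avoid k : exists x, C x /\ forall j, (j < k)%N -> ~~ P j x.
Proof.
elim: k => [|k [x [Cx Hx]]]; first by exists x0.
have [y /andP[Cy Py]] := Pprop k.
pose f (l : 'I_k.+2) := x + (l : nat)%:R *: y.
have Cf l : C (f l) by apply: HC => //; rewrite ler0n.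
have [/existsP[l Hl]|Hno] := boolP [exists l, [forall j : 'I_k.+1, ~~ P j (f l)]].
  exists (f l); split => // j jk.
  by have := forallP Hl (Ordinal jk).
have Hex l : [exists j : 'I_k.+1, P j (f l)].
  apply/existsP; move/existsPn: Hno => /(_ l) /forallPn [j]; rewrite negbK.
  by exists j.
pose g l := odflt ord0 [pick j : 'I_k.+1 | P j (f l)].
have gP l : P (g l) (f l).
  rewrite /g; case: pickP => [j //|/= H0].
  by move/existsP: (Hex l) => [j Hj]; rewrite H0 in Hj.
have ginj : injective g.
  move=> l l' Hg; apply/eqP; apply/negPn/negP => ne.
  have P1 := gP l; have P2 := gP l'; rewrite -Hg in P2.
  have hne : ((l : nat)%:R - (l' : nat)%:R : R) != 0.
    by rewrite subr_eq0 eqr_nat.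
  have ey : y = ((l : nat)%:R - (l' : nat)%:R)^-1 *: (f l + (-1) *: f l').
    rewrite /f scaleN1r opprD addrA [x + _]addrC addrK -scalerBl.
    by rewrite scalerA mulVf // scale1r.
  have Py' : P (g l) y by rewrite ey; apply: PZ; apply: PD => //; apply: PZ.
  have ex : x = f l + (- (l : nat)%:R) *: y by rewrite /f scaleNr addrK.
  have Px' : P (g l) x by rewrite ex; apply: PD => //; apply: PZ.
  have : (g l <= k)%N by rewrite -ltnS.
  rewrite leq_eqVlt => /orP[/eqP E|lt]; first by move: Py'; rewrite E => Py''; rewrite Py'' in Py.
  by have := Hx _ lt; rewrite Px'.
by have := leq_card _ ginj; rewrite !card_ord ltnn.
Qed.
End Avoid.

Section Cuts.
Variables (R : realFieldType) (T V : finType) (q : T -> V) (n : nat)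
  (ends : 'I_n -> V * V).

Lemma cutsetC W e : in_cutset ends (~: W) e = in_cutset ends W e.
Proof. by rewrite /in_cutset !in_setC; case: (_ \in W); case: (_ \in W). Qed.

Lemma costC (c : 'I_n -> R) W : cut_cost ends c (~: W) = cut_cost ends c W.
Proof. by apply: eq_bigl => e; rewrite cutsetC. Qed.

Lemma mincut_le (c : 'I_n -> R) S W :
  separating q S W -> mincut q ends c S <= cut_cost ends c W.
Proof. by move=> sW; rewrite /mincut (bigD1 W) //= ge_min lexx. Qed.

Lemma mincut_ge (c : 'I_n -> R) S x :
  (forall W, separating q S W -> x <= cut_cost ends c W) ->
  x <= cut_cost ends c (q @: S) -> x <= mincut q ends c S.
Proof.
move=> H Hd; rewrite /mincut; apply: (big_ind (fun y => x <= y)) => //.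
by move=> a b ha hb; rewrite le_min ha hb.
Qed.

Lemma mincut_att (c : 'I_n -> R) S :
  exists W, mincut q ends c S = cut_cost ends c W.
Proof.
rewrite /mincut; apply: (big_ind (fun y => exists W, y = cut_cost ends c W)).
- by exists (q @: S).
- move=> a b [Wa ->] [Wb ->].
  case: (leP (cut_cost ends c Wa) (cut_cost ends c Wb)) => h.
    by exists Wa.
  by exists Wb.
- by move=> W _; exists W.
Qed.

Lemma sep_img S : injective q -> separating q S (q @: S).
Proof.
move=> qinj; rewrite /separating; apply/orP; left; apply/eqP/setP => t.
by rewrite inE mem_imset.
Qed.

Definition costv (x : 'rV[R]_n) W := cut_cost ends (fun e => x 0 e) W.

Lemma costv_lin a (x y : 'rV[R]_n) W :
  costv (a *: x + y) W = a * costv x W + costv y W.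
Proof.
rewrite /costv /cut_cost mulr_sumr -big_split /=; apply: eq_bigr => e _.
by rewrite !mxE.
Qed.

Lemma sum_ind (k : nat) (x : 'I_k -> R) (b : 'I_k -> bool) :
  \sum_(e < k) x e * (b e)%:R = \sum_(e < k | b e) x e.
Proof.
rewrite [RHS]big_mkcond /=; apply: eq_bigr => e _.
by case: (b e); rewrite ?mulr1 ?mulr0.
Qed.
End Cuts.

Lemma ex_widen k p (hle : (k <= p)%N) (e : 'I_k) (b : 'I_k -> bool) :
  [exists e0 : 'I_k, (nat_of_ord e0 == nat_of_ord (widen_ord hle e)) && b e0] = b e.
Proof.
case h: (b e).
  by apply/existsP; exists e; rewrite eqxx h.
apply/existsP => -[e' /andP[/eqP h1 h2]].
by have ee : e' = e := val_inj h1; rewrite ee h in h2.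
Qed.

Theorem lemma3p2 (R : realFieldType) (T V : finType) (q : T -> V)
  (n : nat) (ends : 'I_n -> V * V) (c : 'I_n -> R)
  (m : nat) (rep : 'I_m -> {set T}) (sel : 'I_m -> {set V}) :
  injective q -> simple_graph ends -> pos_costs c ->
  (forall S : {set T}, nontriv S -> unique_mincut q ends c S) ->
  bipartition_enum rep -> mincut_selection q ends c rep sel ->
  exists chat : 'I_n -> R, pos_costs chat /\
    forall (V' : finType) (q' : T -> V') (n' : nat)
           (ends' : 'I_n' -> V' * V') (c' : 'I_n' -> R),
      injective q' -> simple_graph ends' -> pos_costs c' ->
      mimicking q ends chat q' ends' c' ->
      (\rank (cutset_matrix R ends sel) <= n')%N.
Proof.
move=> qinj _ cpos Huniq [Hrep _] Hsel.
set A := cutset_matrix R ends sel.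
set r := \rank A.
case: (eqVneq r 0%N) => r0.
  by exists c; split => // *; rewrite r0.
pose I0 := ('I_n + ('I_m * {set V}))%type.
pose Pl (l : I0) := match l with
  | inl _ => true
  | inr (i, W) => [&& separating q (rep i) W, W != sel i & W != ~: sel i] end.
pose L (l : I0) (x : 'rV[R]_n) := match l with
  | inl e => x 0 e
  | inr (i, W) => costv ends x W - costv ends x (sel i) end.
have Llin : forall l a x y, L l (a *: x + y) = a * L l x + L l y.
  move=> [e|[i W]] a x y /=; first by rewrite !mxE.
  by rewrite !costv_lin mulrBr addrACA opprD.
pose C := Cn Pl L.
pose c0 : 'rV[R]_n := \row_e c e.
have costc0 W : costv ends c0 W = cut_cost ends c W.
  by apply: eq_bigr => e _; rewrite mxE.
have Cc0 : C c0.
  apply/forallP => [[e|[i W]]] /=; first by rewrite mxE cpos.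
  apply/implyP => /and3P[sepW nW1 nW2]; rewrite subr_gt0 !costc0.
  have [W0 [sep0 H0]] := Huniq _ (Hrep i).
  have [sepi eqi] := Hsel i.
  have : (sel i == W0) || (sel i == ~: W0).
    apply/negPn/negP; rewrite negb_or => /andP[h1 h2].
    have := H0 _ sepi h1 h2; rewrite eqi => h.
    by have := lt_le_trans h (mincut_le ends c sep0); rewrite ltxx.
  case/orP => /eqP E.
    rewrite E; apply: H0 => //; first by rewrite -E.
    by rewrite -E.
  rewrite E costC; apply: H0 => //; last by rewrite -E.
  by move: nW2; rewrite E setCK.
have rpos : (0 < r)%N by rewrite lt0n.
pose MI := 'M[bool]_(r.-1, m).
pose BR (B : MI) : 'M[R]_(r.-1, m) := map_mx (fun b : bool => b%:R) B.
pose bad (B : MI) (x : 'rV[R]_n) := (x *m A^T <= BR B)%MS.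
have badlin B a x y : bad B x -> bad B y -> bad B (a *: x + y).
  rewrite /bad mulmxDl -scalemxAl => hx hy.
  by apply: addmx_sub => //; apply: scalemx_sub.
have badprop B : exists y, C y && ~~ bad B y.
  have [e He] : exists e, ~~ bad B (delta_mx 0 e).
    case: (boolP [forall e, bad B (delta_mx 0 e)]) => [/forallP Hall|/forallPn[e He]];
      last by exists e.
    have sub : (A^T <= BR B)%MS.
      by apply/row_subP => e; rewrite rowE; exact: Hall e.
    have := leq_trans (mxrankS sub) (rank_leq_row _).
    by rewrite mxrank_tr -/r leqNgt ltn_predL rpos.
  case: (boolP (bad B c0)) => hc; last by exists c0; apply/andP.
  have [mu [mu0 Cmu]] := Cn_open Llin (delta_mx 0 e) Cc0.
  exists (mu *: c0 + delta_mx 0 e); apply/andP; split; first exact: Cmu.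
  apply/negP => hb.
  have := badlin B (- mu) _ _ hc hb.
  by rewrite scaleNr addrA addNr add0r (negbTE He).
pose Bs := enum MI.
pose B0 : MI := const_mx false.
pose P j := bad (nth B0 Bs j).
have Ccone : forall a x y, 0 <= a -> C x -> C y -> C (x + a *: y).
  by move=> a x y; apply: Cn_cone.
have [y [Cy Hy]] := avoid Ccone (P := P) (fun j => badlin _) (fun j => badprop _) Cc0 (size Bs).
have Hy' B : ~~ bad B y.
  have := Hy (index B Bs); rewrite /P nth_index ?mem_enum // index_mem mem_enum.
  by move=> /(_ isT).
have Cy' l : Pl l -> 0 < L l y by move=> Pll; exact: (implyP (forallP Cy l) Pll).
exists (fun e => y 0 e); split.
  by move=> e; exact: (Cy' (inl e) isT).
move=> V' q' n' ends' c' _ _ _ Hmim.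
rewrite leqNgt; apply/negP => hlt.
have Hv i : mincut q ends (fun e => y 0 e) (rep i) = costv ends y (sel i).
  have [sepi _] := Hsel i.
  apply/le_anti/andP; split; first exact: mincut_le sepi.
  have Hs W : separating q (rep i) W -> costv ends y (sel i) <= cut_cost ends (fun e => y 0 e) W.
    move=> sW; case: (eqVneq W (sel i)) => [->//|n1].
    case: (eqVneq W (~: sel i)) => [->|n2]; first by rewrite costC.
    have := Cy' (inr (i, W)); rewrite /= sW n1 n2 /= subr_gt0 => /(_ isT).
    exact: ltW.
  by apply: mincut_ge => //; apply: Hs; apply: sep_img.
pose Wf i := odflt setT [pick W | mincut q' ends' c' (rep i) == cut_cost ends' c' W].
have HWf i : mincut q' ends' c' (rep i) = cut_cost ends' c' (Wf i).
  rewrite /Wf; case: pickP => [W /eqP //|H0].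
  by have [W HW] := mincut_att q' ends' c' (rep i); have := H0 W; rewrite HW eqxx.
pose B : MI := \matrix_(k, i) [exists e : 'I_n', (nat_of_ord e == k) && in_cutset ends' (Wf i) e].
pose c'r : 'rV[R]_n' := \row_e c' e.
pose M : 'M[R]_(n', m) := \matrix_(e, i) (in_cutset ends' (Wf i) e)%:R.
have E : y *m A^T = c'r *m M.
  apply/rowP => i; rewrite !mxE.
  have -> : \sum_j y 0 j * A^T j i = costv ends y (sel i).
    by rewrite /costv /cut_cost -sum_ind; apply: eq_bigr => e _; rewrite !mxE.
  rewrite -Hv -Hmim ?Hrep // HWf /cut_cost -sum_ind.
  by apply: eq_bigr => e _; rewrite !mxE.
have hle : (n' <= r.-1)%N by rewrite -ltnS prednK.
have := Hy' B; rewrite /bad E => /negP; apply.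
apply: submx_trans (submxMl _ _) _; apply/row_subP => e.
have -> : row e M = row (widen_ord hle e) (BR B).
  by apply/rowP => i; rewrite !mxE ex_widen.
exact: row_sub.
Qed.
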